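(* Let $\mathcal A=(S,R)$ be a finitary argumentation network ($S\neq\varnothing$, $R\subseteq S\times S$, each element has finitely many attackers) and let $\Delta_{\mathcal A}$ be the $\mathbf{CN}$-theory $$\Delta_{\mathcal A}=\{x\mid x\in S \text{ unattacked}\}\cup\{y\leftrightarrow \textstyle\bigwedge_{zRy}Nz\mid y\in S\}\cup\{z\to Ny\mid zRy\}\cup\{(\textstyle\bigwedge_{zRy}\neg z)\wedge(\bigvee_{zRy}\neg Nz)\to \neg y\wedge\neg Ny\mid y\in S\}.$$ Then $\Delta_{\mathcal A}$ is $\mathbf{CN}$-consistent.
   Context: The logic $\mathbf{CN}$: the elements of $S$ are basic atoms; atomic formulas are $q$ and $Nq$ for basic atoms $q$; formulas are built with classical connectives; $\Delta\vdash_{\mathbf{CN}}A$ iff $\Delta\cup\{Nq\to\neg q\mid q\text{ basic atom}\}\vdash A$ in classical propositional logic (treating each $q$ and $Nq$ as distinct classical atoms). Consistency means $\Delta_{\mathcal A}\nvdash_{\mathbf{CN}}\bot$. Empty conjunctions are $\top$, empty disjunctions are $\bot$. *)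

(* Defs.v *)
From Stdlib Require Import List.
Import ListNotations.
Set Implicit Arguments.

Inductive atom (S : Type) : Type :=
| Basic : S -> atom S
| NAtom : S -> atom S.

Inductive form (S : Type) : Type :=
| FVar : atom S -> form S
| FBot : form S
| FTop : form S
| FNeg : form S -> form S
| FAnd : form S -> form S -> form S
| FOr  : form S -> form S -> form S
| FImp : form S -> form S -> form S
| FIff : form S -> form S -> form S.

Arguments FBot {S}.
Arguments FTop {S}.

Definition BigAnd (S : Type) (l : list (form S)) : form S := fold_right (@FAnd S) FTop l.
Definition BigOr  (S : Type) (l : list (form S)) : form S := fold_right (@FOr S) FBot l.

(* Classical semantics: q and Nq are independent classical atoms. *)
Fixpoint eval (S : Type) (v : atom S -> Prop) (A : form S) : Prop :=
  match A with
  | FVar a => v a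
  | FBot => False
  | FTop => True
  | FNeg B => ~ eval v B
  | FAnd B C => eval v B /\ eval v C
  | FOr B C => eval v B \/ eval v C
  | FImp B C => eval v B -> eval v C
  | FIff B C => (eval v B <-> eval v C)
  end.

Definition CN_axiom (S : Type) (A : form S) : Prop :=
  exists q : S, A = FImp (FVar (NAtom q)) (FNeg (FVar (Basic q))).

(* Classical derivability from a (possibly infinite) set of premises:
   A follows from finitely many premises (by completeness of classical
   propositional logic for finite premise sets, this is Hilbert-style
   derivability). *)
Definition classical_derives (S : Type) (Gam : form S -> Prop) (A : form S) : Prop :=
  exists G : list (form S),
    (forall B, In B G -> Gam B) /\
    (forall v : atom S -> Prop, (forall B, In B G -> eval v B) -> eval v A).

Definition CN_derives (S : Type) (Delta : form S -> Prop) (A : form S) : Prop :=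
  classical_derives (fun B => Delta B \/ CN_axiom B) A.

Definition CN_consistent (S : Type) (Delta : form S -> Prop) : Prop :=
  ~ CN_derives Delta FBot.

Definition lists_attackers (S : Type) (R : S -> S -> Prop) (y : S) (l : list S) : Prop :=
  forall z, R z y <-> In z l.

Definition finitary (S : Type) (R : S -> S -> Prop) : Prop :=
  forall y, exists l : list S, lists_attackers R y l.

Definition unattacked (S : Type) (R : S -> S -> Prop) (x : S) : Prop :=
  forall z, ~ R z x.

(* The theory Delta_A.  Big conjunctions/disjunctions over attackers are
   formed from any list enumerating the attackers (all such choices are
   included; they are classically equivalent). *)
Definition Delta_A (S : Type) (R : S -> S -> Prop) (A : form S) : Prop :=
  (exists x, unattacked R x /\ A = FVar (Basic x))
  \/ (exists y l, lists_attackers R y l /\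
        A = FIff (FVar (Basic y)) (BigAnd (map (fun z => FVar (NAtom z)) l)))
  \/ (exists z y, R z y /\ A = FImp (FVar (Basic z)) (FVar (NAtom y)))
  \/ (exists y l, lists_attackers R y l /\
        A = FImp (FAnd (BigAnd (map (fun z => FNeg (FVar (Basic z))) l))
                       (BigOr (map (fun z => FNeg (FVar (NAtom z))) l)))
                 (FAnd (FNeg (FVar (Basic y))) (FNeg (FVar (NAtom y))))).

(* Main.v *)
Require Import Defs.
From Stdlib Require Import List.
Import ListNotations.

Section G.
Variable S : Type.
Variable R : S -> S -> Prop.

Definition Fop (X : S -> Prop) (y : S) : Prop :=
  forall z, R z y -> exists w, R w z /\ X w.

Definition IN (y : S) : Prop :=
  forall X : S -> Prop, (forall a, Fop X a -> X a) -> X y.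

Lemma Fop_mono (X Y : S -> Prop) : (forall a, X a -> Y a) -> forall a, Fop X a -> Fop Y a.
Proof. intros H a Fa z Rz. destruct (Fa z Rz) as [w [? ?]]. eauto. Qed.

Lemma IN_closed : forall a, Fop IN a -> IN a.
Proof.
  intros a Fa X HX. apply HX. eapply Fop_mono; [|exact Fa].
  intros b Ib. apply Ib, HX.
Qed.

Lemma IN_unfold : forall a, IN a -> Fop IN a.
Proof.
  intros a Ia. apply Ia. intros b Fb. eapply Fop_mono; [|exact Fb].
  apply IN_closed.
Qed.

Definition Q (b : S) : Prop := IN b /\ forall a, IN a -> ~ R a b /\ ~ R b a.

Lemma IN_Q : forall b, IN b -> Q b.
Proof.
  intros b Ib. apply Ib. intros c Fc.
  assert (Ic : IN c).
  { apply IN_closed. eapply Fop_mono; [|exact Fc]. intros x [? _]; auto. }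
  split; [exact Ic|]. intros a Ia. split.
  - intros Rac. destruct (Fc a Rac) as [w [Rwa [_ Qw]]].
    destruct (Qw a Ia) as [_ H]. exact (H Rwa).
  - intros Rca. destruct (IN_unfold _ Ia c Rca) as [u [Ruc Iu]].
    destruct (Fc u Ruc) as [w [Rwu [_ Qw]]].
    destruct (Qw u Iu) as [_ H]. exact (H Rwu).
Qed.

Definition val (x : atom S) : Prop :=
  match x with
  | Basic y => IN y
  | NAtom y => exists z, R z y /\ IN z
  end.

Lemma eval_BigAnd (f : S -> form S) (l : list S) :
  eval val (BigAnd (map f l)) <-> forall z, In z l -> eval val (f z).
Proof.
  induction l as [|a l IH]; simpl.
  - split; [tauto|auto].
  - rewrite IH. split.
    + intros [H1 H2] z [<-|Hz]; auto.
    + intros H; split; auto.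
Qed.

Lemma eval_BigOr (f : S -> form S) (l : list S) :
  eval val (BigOr (map f l)) <-> exists z, In z l /\ eval val (f z).
Proof.
  induction l as [|a l IH]; simpl.
  - split; [tauto|intros [z [[] _]]].
  - rewrite IH. split.
    + intros [H|[z [Hz H]]]; eauto.
    + intros [z [[<-|Hz] H]]; eauto.
Qed.

Lemma model : forall B, Delta_A R B \/ CN_axiom B -> eval val B.
Proof.
  intros B [[H|[H|[H|H]]]|H].
  - destruct H as [x [Hu ->]]. simpl. apply IN_closed. intros z Rz. exfalso; exact (Hu z Rz).
  - destruct H as [y [l [Hl ->]]]. simpl. rewrite eval_BigAnd. simpl. split.
    + intros Iy z Hz. apply (IN_unfold y); auto. apply Hl; auto.
    + intros H. apply IN_closed. intros z Rz. apply H, Hl, Rz.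
  - destruct H as [z [y [Rzy ->]]]. simpl. eauto.
  - destruct H as [y [l [Hl ->]]]. simpl. rewrite eval_BigAnd, eval_BigOr. simpl.
    intros [H1 [z [Hz H2]]]. split.
    + intros Iy. apply H2. apply (IN_unfold _ Iy). apply Hl, Hz.
    + intros [u [Ruy Iu]]. apply (H1 u). apply Hl, Ruy. exact Iu.
  - destruct H as [q ->]. simpl. intros [z [Rzq Iz]] Iq.
    destruct (IN_Q _ Iq) as [_ H]. destruct (H z Iz) as [H' _]. exact (H' Rzq).
Qed.
End G.

Theorem corollary6 (S : Type) (s0 : S) (R : S -> S -> Prop)
  (Hfin : finitary R) : CN_consistent (Delta_A R).
Proof.
  intros [G [HG Hv]]. apply (Hv (@val S R)). intros B HB. apply (@model S R), HG, HB.
Qed.
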